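(* Let $\varepsilon\ge0$ and $t\ge1$. For probability vectors $G=(g_1,\dots,g_t)$, $G'=(g'_1,\dots,g'_t)$ define $$\overline H^*(G,G')=\max_{S\subseteq[t]}\frac{\sum_{i\in[t]\setminus S}g_i+e^{\varepsilon}\sum_{j\in S}g_j}{\sum_{i\in[t]\setminus S}g'_i+e^{\varepsilon}\sum_{j\in S}g'_j}.$$ Then $\max_{G,G'}\ln\overline H^*(G,G')=\varepsilon$, where the maximum is over all pairs of probability vectors of length $t$, and this maximum is attained by any pair $G,G'$ such that for every $i\in[t]$, $g_i\neq0$ implies $g'_i=0$.
   Context: In the paper, $G$ and $G'$ are the conditional distributions $P(\hat X\mid X_k=x)$ and $P(\hat X\mid X_k=x')$ of an attribute $\hat X$ with $t$ values given two values of a correlated attribute $X_k$, and $\ln\max_{x,x'}\overline H^*(G,G')$ is the (upper bound on the) correlation-induced privacy leakage $L_{\hat X\to X_k}$ when $\hat X$ is perturbed by an $\varepsilon$-LDP mechanism. $[t]=\{1,\dots,t\}$. *)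

(* Defs.v *)
From HB Require Import structures.
From mathcomp Require Import all_boot all_order all_algebra.
From mathcomp Require Import all_classical all_reals all_analysis.
Set Implicit Arguments. Unset Strict Implicit. Unset Printing Implicit Defensive.
Import Order.TTheory GRing.Theory Num.Theory.
Local Open Scope ring_scope.

Definition prob_vec (R : realType) (t : nat) (g : 'I_t -> R) : Prop :=
  (forall i, 0 <= g i) /\ \sum_(i < t) g i = 1.

(* \overline{H}^*(G,G') = max over S ⊆ [t] of the ratio. The ratios are
   nonnegative, so folding Num.max from 0 computes the maximum over all
   (finitely many, nonempty family of) subsets S. *)
Definition Hbar (R : realType) (eps : R) (t : nat) (g g' : 'I_t -> R) : R :=
  \big[Num.max/0]_(S : {set 'I_t})
    ((\sum_(i in ~: S) g i + expR eps * \sum_(j in S) g j) /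
     (\sum_(i in ~: S) g' i + expR eps * \sum_(j in S) g' j)).

(* Main.v *)
Require Import Defs.
From HB Require Import structures.
From mathcomp Require Import all_boot all_order all_algebra.
From mathcomp Require Import all_classical all_reals all_analysis.
From mathcomp Require Import lra.
Import Order.TTheory GRing.Theory Num.Theory.
Local Open Scope ring_scope.

Lemma sumT (R : realType) t (g : 'I_t -> R) :
  \sum_(i in [set: 'I_t]) g i = \sum_i g i.
Proof. by apply: eq_bigl => i; rewrite inE. Qed.

Lemma sumC_split (R : realType) t (g : 'I_t -> R) (S : {set 'I_t}) :
  \sum_(i in ~: S) g i + \sum_(i in S) g i = \sum_i g i.
Proof.
by rewrite -sumT [RHS](big_setID S) /= finset.setTI finset.setTD addrC.
Qed.

Arguments sumC_split {R t}.

Lemma le_bigmax0 (R : realType) (I : finType) (F : I -> R) (i : I) :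
  F i <= \big[Num.max/0]_(j : I) F j.
Proof.
elim: (index_enum I) (mem_index_enum i) => [//|x s IH].
rewrite big_cons inE => /orP [/eqP <- | /IH h]; rewrite le_max ?lexx //.
by rewrite h orbT.
Qed.

Arguments le_bigmax0 {R I}.

Lemma ratio_bound (R : realType) (eps : R) t (g g' : 'I_t -> R) S :
  0 <= eps -> prob_vec g -> prob_vec g' ->
  0 <= (\sum_(i in ~: S) g i + expR eps * \sum_(j in S) g j) /
     (\sum_(i in ~: S) g' i + expR eps * \sum_(j in S) g' j) <= expR eps.
Proof.
move=> he [g0 g1] [g'0 g'1].
have E1 : 1 <= expR eps by have := expR_ge1Dx eps; lra.
have := sumC_split g S; have := sumC_split g' S; rewrite g1 g'1.
have c0 : 0 <= \sum_(i in ~: S) g i by apply: sumr_ge0.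
have a0 : 0 <= \sum_(i in S) g i by apply: sumr_ge0.
have c'0 : 0 <= \sum_(i in ~: S) g' i by apply: sumr_ge0.
have a'0 : 0 <= \sum_(i in S) g' i by apply: sumr_ge0.
move: E1 c0 a0 c'0 a'0.
set c := \sum_(i in ~: S) g i; set a := \sum_(i in S) g i.
set c' := \sum_(i in ~: S) g' i; set a' := \sum_(i in S) g' i.
set E := expR eps => E1 c0 a0 c'0 a'0 h' h.
have D1 : 1 <= c' + E * a' by nra.
have Dp : 0 < c' + E * a' by lra.
apply/andP; split.
  apply: divr_ge0; nra.
rewrite ler_pdivrMr //.
have : E * a' <= E * E * a' by nra.
nra.
Qed.

Arguments ratio_bound {R eps t g g'}.

Theorem corollary2 (R : realType) (eps : R) (t : nat) :
  0 <= eps -> (0 < t)%N ->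
  (* upper bound: ln Hbar <= eps for every pair of probability vectors *)
  (forall g g' : 'I_t -> R, prob_vec g -> prob_vec g' ->
      ln (Hbar eps g g') <= eps) /\
  (* attainment by every pair with g_i <> 0 -> g'_i = 0 *)
  (forall g g' : 'I_t -> R, prob_vec g -> prob_vec g' ->
      (forall i, g i != 0 -> g' i = 0) ->
      ln (Hbar eps g g') = eps) /\
  (* hence the maximum over all pairs is eps (such a pair exists when t >= 2) *)
  ((1 < t)%N -> exists g g' : 'I_t -> R,
      [/\ prob_vec g, prob_vec g' & ln (Hbar eps g g') = eps]).
Proof.
move=> he ht.
have ub : forall g g' : 'I_t -> R, prob_vec g -> prob_vec g' ->
    0 < Hbar eps g g' <= expR eps.
  move=> g g' pg pg'; apply/andP; split.
    apply: (@lt_le_trans _ _ 1); first exact: ltr01.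
    have := le_bigmax0 (fun S : {set 'I_t} =>
      (\sum_(i in ~: S) g i + expR eps * \sum_(j in S) g j) /
     (\sum_(i in ~: S) g' i + expR eps * \sum_(j in S) g' j)) finset.set0.
    rewrite /Hbar; apply: le_trans.
    rewrite finset.setC0 !big_set0 !mulr0 !addr0.
    have -> : \sum_(i in [set: 'I_t]) g' i = 1 by rewrite sumT; case: pg'.
    have -> : \sum_(i in [set: 'I_t]) g i = 1 by rewrite sumT; case: pg.
    by rewrite divr1.
  rewrite /Hbar; apply: (big_ind (fun x => x <= expR eps)).
  - exact: expR_ge0.
  - by move=> x y hx hy; rewrite ge_max hx hy.
  - by move=> S _; case/andP: (ratio_bound S he pg pg').
have attain : forall g g' : 'I_t -> R, prob_vec g -> prob_vec g' ->
      (forall i, g i != 0 -> g' i = 0) -> ln (Hbar eps g g') = eps.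
  move=> g g' pg pg' hd.
  suff -> : Hbar eps g g' = expR eps by rewrite expRK.
  apply/le_anti; apply/andP; split; first by case/andP: (ub _ _ pg pg').
  pose S := [set i | g i != 0].
  have := le_bigmax0 (fun S : {set 'I_t} =>
      (\sum_(i in ~: S) g i + expR eps * \sum_(j in S) g j) /
     (\sum_(i in ~: S) g' i + expR eps * \sum_(j in S) g' j)) S.
  apply: le_trans => /=.
  have h1 : \sum_(i in ~: S) g i = 0.
    by apply: big1 => i; rewrite !inE negbK => /eqP.
  have h2 : \sum_(i in S) g' i = 0.
    by apply: big1 => i; rewrite !inE => /hd.
  have e1 : \sum_(i in S) g i = 1.
    by have := sumC_split g S; case: pg => _ ->; rewrite h1 add0r.
  have e2 : \sum_(i in ~: S) g' i = 1.
    by have := sumC_split g' S; case: pg' => _ ->; rewrite h2 addr0.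
  by rewrite h1 h2 e1 e2 add0r mulr0 addr0 mulr1 divr1.
split.
  move=> g g' pg pg'; case/andP: (ub _ _ pg pg') => h1 h2.
  rewrite -[X in _ <= X](expRK eps).
  rewrite ler_ln ?posrE ?expR_gt0 //.
split; first exact: attain.
move=> h1t.
pose i0 : 'I_t := Ordinal ht.
pose i1 : 'I_t := Ordinal h1t.
pose g := fun i : 'I_t => if i == i0 then 1 else 0 : R.
pose g' := fun i : 'I_t => if i == i1 then 1 else 0 : R.
have pv : forall j : 'I_t, prob_vec (fun i : 'I_t => if i == j then 1 else 0 : R).
  move=> j; split; first by move=> i; case: ifP.
  by rewrite (bigD1 j) //= eqxx big1 ?addr0 // => i /negbTE ->.
exists g, g'; split; [exact: pv| exact: pv|].
apply: attain; [exact: pv|exact: pv|].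
move=> i; rewrite /g /g'; have [->|_] := eqVneq i i0; last by rewrite eqxx.
move=> _.
by case: eqP => // /(congr1 val).
Qed.
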